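(* Let $\mathcal{M}$ be a finite structure with unary predicates $A_u, A_v, A_w, \mathrm{FHalf}, \mathrm{SHalf}$ and a binary predicate $\mathrm{Mult}$ such that: the sets $A_u^{\mathcal{M}}, A_v^{\mathcal{M}}, A_w^{\mathcal{M}}$ are pairwise disjoint; $\mathrm{FHalf}^{\mathcal{M}}$ and $\mathrm{SHalf}^{\mathcal{M}}$ partition $M$ and $|\mathrm{FHalf}^{\mathcal{M}}|=\frac12|M|$; $A_u^{\mathcal{M}}\cup A_v^{\mathcal{M}}\subseteq\mathrm{FHalf}^{\mathcal{M}}$; $A_w^{\mathcal{M}}\subseteq\mathrm{SHalf}^{\mathcal{M}}$. Suppose $\mathcal{M}$ satisfies the conjunction of $$\forall y\,\big(A_w(y)\to\exists x\,\mathrm{Mult}(x,y)\big)\wedge\forall x\forall y\,\big(\mathrm{Mult}(x,y)\to(A_u(x)\wedge A_w(y))\big),$$ $$\forall x\,\big(A_u(x)\to\exists^{=50\%}y\,([\mathrm{SHalf}(y)\wedge\neg\mathrm{Mult}(x,y)]\vee A_v(y))\big),$$ $$\forall x\,\big(A_w(x)\to\exists^{=50\%}y\,([\mathrm{SHalf}(y)\wedge x\neq y]\vee\mathrm{Mult}(y,x))\big).$$ Then $|A_u^{\mathcal{M}}|\cdot|A_v^{\mathcal{M}}| = |A_w^{\mathcal{M}}|$.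
   Context: Structures are finite, over relational signatures with unary and binary relation symbols and equality. Global percentage quantifier: for a rational $0\le q\le 100$, $\mathcal{M}\models \exists^{=q\%}y\,\varphi(y)$ (possibly with other free variables fixed) iff the number of elements $b\in M$ with $\mathcal{M}\models\varphi(b)$ equals $\frac{q}{100}\cdot|M|$. *)

(* Defs.v *)
From mathcomp Require Import all_boot all_order all_algebra.
Set Implicit Arguments. Unset Strict Implicit. Unset Printing Implicit Defensive.
Import GRing.Theory Num.Theory.
Local Open Scope ring_scope.

(* Global percentage quantifier over a finite structure with universe T:
   exists^{=q%} y, P y  iff  #{y | P y} = (q/100) * |T|. *)
Definition exists_pct (T : finType) (q : rat) (P : pred T) : Prop :=
  (#|[set y | P y]|%:R : rat) = q / 100 * (#|T|%:R).

(* Main.v *)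
Require Import Defs.
From mathcomp Require Import all_boot all_order all_algebra.
From mathcomp Require Import ring lra zify.
Import GRing.Theory Num.Theory.
Local Open Scope ring_scope.

Theorem mainTheorem4 (T : finType)
  (Au Av Aw FHalf SHalf : {set T}) (Mult : rel T)
  (dis_uv : [disjoint Au & Av]) (dis_uw : [disjoint Au & Aw])
  (dis_vw : [disjoint Av & Aw])
  (part_disj : [disjoint FHalf & SHalf]) (part_cover : FHalf :|: SHalf = [set: T])
  (half : (#|FHalf|%:R : rat) = 1 / 2 * #|T|%:R)
  (sub_uv : Au :|: Av \subset FHalf) (sub_w : Aw \subset SHalf)
  (ax1a : forall y, y \in Aw -> exists x, Mult x y)
  (ax1b : forall x y, Mult x y -> x \in Au /\ y \in Aw)
  (ax2 : forall x, x \in Au ->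
     exists_pct 50 (fun y => ((y \in SHalf) && ~~ Mult x y) || (y \in Av)))
  (ax3 : forall x, x \in Aw ->
     exists_pct 50 (fun y => ((y \in SHalf) && (x != y)) || Mult y x)) :
  (#|Au| * #|Av| = #|Aw|)%N.
Proof.
have hS : #|SHalf| = #|FHalf|.
  have := cardsU FHalf SHalf.
  rewrite part_cover cardsT.
  move: part_disj; rewrite -setI_eq0 => /eqP ->; rewrite cards0 subn0 => hn.
  have : (#|T|%:R : rat) = (#|FHalf| + #|FHalf|)%:R by rewrite natrD half; lra.
  rewrite hn => /eqP; rewrite eqr_nat => /eqP; lia.
have FS : forall y, y \in FHalf -> y \in SHalf -> False.
  move=> y yF yS; move: part_disj; rewrite -setI_eq0 => /eqP/setP/(_ y).
  by rewrite !inE yF yS.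
have key : forall P : pred T, exists_pct 50 P -> #|[set y | P y]| = #|SHalf|.
  move=> P; rewrite /exists_pct hS => H.
  apply/eqP; rewrite -(eqr_nat rat) H half; apply/eqP.
  have -> : (50 / 100 : rat) = 1 / 2 by apply/eqP.
  by [].
have hu : forall x, x \in Au -> #|[set y | Mult x y]| = #|Av|.
  move=> x xu; have := key _ (ax2 x xu).
  have -> : [set y | (y \in SHalf) && ~~ Mult x y || (y \in Av)] =
            (SHalf :\: [set y | Mult x y]) :|: Av.
    by apply/setP => y; rewrite !inE andbC.
  rewrite cardsU.
  have -> : (SHalf :\: [set y | Mult x y]) :&: Av = set0.
    apply/setP => y; rewrite !inE; apply/negbTE; apply/negP => /andP[/andP[_ yS] yv].
    have : y \in FHalf by apply: (subsetP sub_uv); rewrite inE yv orbT.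
    by move=> yF; exact: (FS y yF yS).
  rewrite cards0 subn0 cardsD.
  have -> : SHalf :&: [set y | Mult x y] = [set y | Mult x y].
    apply/setIidPr/subsetP => y; rewrite inE => /ax1b [_ yw].
    exact: (subsetP sub_w).
  have : (#|[set y | Mult x y]| <= #|SHalf|)%N.
    apply: subset_leq_card; apply/subsetP => y; rewrite inE => /ax1b [_ yw].
    exact: (subsetP sub_w).
  lia.
have hw : forall w, w \in Aw -> #|[set y | Mult y w]| = 1%N.
  move=> w ww; have := key _ (ax3 w ww).
  have -> : [set y | (y \in SHalf) && (w != y) || Mult y w] =
            (SHalf :\ w) :|: [set y | Mult y w].
    by apply/setP => y; rewrite !inE [y == w]eq_sym andbC.
  rewrite cardsU.
  have -> : (SHalf :\ w) :&: [set y | Mult y w] = set0.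
    apply/setP => y; rewrite !inE; apply/negbTE; apply/negP => /andP[/andP[_ yS] /ax1b [yu _]].
    have : y \in FHalf by apply: (subsetP sub_uv); rewrite inE yu.
    by move=> yF; exact: (FS y yF yS).
  rewrite cards0 subn0 (cardsD1 w SHalf) (subsetP sub_w w ww) /=.
  lia.
have E1 : (\sum_x \sum_y (Mult x y : nat) = #|Au| * #|Av|)%N.
  rewrite -sum_nat_const [RHS]big_mkcond /=; apply: eq_bigr => x _.
  case: ifP => xu.
    by rewrite -(hu x xu) -sum1_card [RHS]big_mkcond /=; apply: eq_bigr => y _; rewrite inE; case: (Mult x y).
  apply: big1 => y _; case m: (Mult x y) => //.
  by have [] := ax1b _ _ m; rewrite xu.
have E2 : (\sum_x \sum_y (Mult x y : nat) = #|Aw|)%N.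
  rewrite exchange_big /= -sum1_card [RHS]big_mkcond /=; apply: eq_bigr => y _.
  case: ifP => yw.
    by rewrite -(hw y yw) -sum1_card [RHS]big_mkcond /=; apply: eq_bigr => x _; rewrite inE; case: (Mult x y).
  apply: big1 => x _; case m: (Mult x y) => //.
  by have [] := ax1b _ _ m; rewrite yw.
by rewrite -E1 E2.
Qed.
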